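(* Let $G$ be a complete geometric graph and let $B$ be a blocker for $\mathcal{T}_{\leq 3}(G)$. Let $a$ be a leaf of $B$ with leaf edge $[a,b]$, let $l(a,b)^{+}$ be one of the two open sides of the line $l(a,b)$, and suppose $V(G)\cap l(a,b)^{+}\neq\emptyset$. Let $c\in V(G)\cap l(a,b)^{+}$ be the vertex for which the angle $\angle abc$ is maximal among all vertices in $l(a,b)^{+}$. Then $[b,c]\in E(B)$.
   Context: A geometric graph is a graph whose vertices are points in the plane in general position (no three collinear) and whose edges are straight segments between pairs of vertices; $G$ is complete if all pairs of vertices are joined. $l(a,b)$ is the line through $a$ and $b$. $\mathcal{T}_{\leq k}(G)$ denotes the family of all simple (non-crossing) spanning trees of $G$ of (graph) diameter at most $k$. A subgraph $B$ blocks a family $\mathcal{F}$ of subgraphs if it shares at least one edge with every member of $\mathcal{F}$; a blocker of $\mathcal{F}$ is a subgraph that blocks $\mathcal{F}$ and has the smallest possible number of edges among all subgraphs blocking $\mathcal{F}$. A leaf of $B$ is a vertex of degree 1 in $B$, and its leaf edge is the unique edge of $B$ containing it. *)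

(* Defs.v *)
From HB Require Import structures.
From mathcomp Require Import all_boot all_order all_algebra.
From mathcomp Require Import reals trigo.
Set Implicit Arguments. Unset Strict Implicit. Unset Printing Implicit Defensive.
Import Order.TTheory GRing.Theory Num.Theory.
Local Open Scope ring_scope.

Section Geo.
Variable R : realType.
Notation pt := (R * R)%type.

Definition orient (p q r : pt) : R :=
  (q.1 - p.1) * (r.2 - p.2) - (q.2 - p.2) * (r.1 - p.1).

Definition dot (u v : pt) : R := u.1 * v.1 + u.2 * v.2.
Definition vsub (u v : pt) : pt := (u.1 - v.1, u.2 - v.2).
Definition vnorm (u : pt) : R := Num.sqrt (dot u u).

Definition angle (p q r : pt) : R :=
  acos (dot (vsub p q) (vsub r q) / (vnorm (vsub p q) * vnorm (vsub r q))).

Definition seg_meet (p q r s : pt) : Prop :=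
  exists t u : R, [/\ 0 <= t <= 1, 0 <= u <= 1 &
    ((1 - t) * p.1 + t * q.1 = (1 - u) * r.1 + u * s.1 /\
     (1 - t) * p.2 + t * q.2 = (1 - u) * r.2 + u * s.2)].
End Geo.

Section Graphs.
Variable T : finType.

(* edges of the complete graph on T: the 2-element subsets *)
Definition is_edge (e : {set T}) : bool := #|e| == 2.

Definition adj (E : {set {set T}}) : rel T := fun x y => [set x; y] \in E.

Definition dist_le (E : {set {set T}}) (k : nat) (u v : T) : Prop :=
  exists s : seq T, (size s <= k)%N /\ path (adj E) u s /\ last u s = v.

Definition connected_es (E : {set {set T}}) : Prop :=
  forall u v : T, exists s : seq T, path (adj E) u s /\ last u s = v.

Definition has_cycle (E : {set {set T}}) : Prop :=
  exists (x : T) (s : seq T), [/\ uniq (x :: s), (2 <= size s)%N,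
    path (adj E) x s & adj E (last x s) x].

Definition spanning_tree (E : {set {set T}}) : Prop :=
  [/\ forall e, e \in E -> is_edge e, connected_es E & ~ has_cycle E].

Definition diam_le (E : {set {set T}}) (k : nat) : Prop :=
  forall u v : T, dist_le E k u v.
End Graphs.

Section GeoGraph.
Variables (R : realType) (T : finType) (p : T -> (R * R)%type).

Definition general_position : Prop :=
  injective p /\
  forall x y z : T, x != y -> y != z -> x != z -> orient (p x) (p y) (p z) != 0.

Definition edges_cross (e f : {set T}) : Prop :=
  exists x y z w : T, [/\ e = [set x; y], f = [set z; w],
    [disjoint e & f] & seg_meet (p x) (p y) (p z) (p w)].

Definition simple_tree_diam_le (k : nat) (E : {set {set T}}) : Prop :=
  [/\ spanning_tree E, diam_le E k &
      forall e f, e \in E -> f \in E -> ~ edges_cross e f].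

Definition blocks (F : {set {set T}} -> Prop) (B : {set {set T}}) : Prop :=
  forall E, F E -> exists2 e, e \in B & e \in E.

Definition blocker (F : {set {set T}} -> Prop) (B : {set {set T}}) : Prop :=
  [/\ forall e, e \in B -> is_edge e, blocks F B &
      forall B' : {set {set T}}, (forall e, e \in B' -> is_edge e) -> blocks F B' ->
                 (#|B| <= #|B'|)%N].

Definition degree (B : {set {set T}}) (a : T) : nat := #|[set e in B | a \in e]|.
End GeoGraph.

(* Main.v *)
Require Import Defs.
From HB Require Import structures.
From mathcomp Require Import all_boot all_order all_algebra.
From mathcomp Require Import reals trigo.
From mathcomp Require Import ring lra.
Import Order.TTheory GRing.Theory Num.Theory.
Local Open Scope ring_scope.
Section G.
Variable R : realType.
Definition gg (d h : R) := d / Num.sqrt (d^+2 + h^+2).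

Lemma sqpos (d h : R) : h != 0 -> 0 < Num.sqrt (d^+2 + h^+2).
Proof. move=> h0; rewrite sqrtr_gt0; have := sqr_ge0 d; have : 0 < h^+2 by rewrite exprn_even_gt0.
lra. Qed.

Lemma gg_bounds d h : h != 0 -> -1 <= gg d h <= 1.
Proof.
move=> h0; have sp := sqpos d h h0; set s := Num.sqrt _ in sp *.
have s2 : s^+2 = d^+2 + h^+2 by rewrite sqr_sqrtr // addr_ge0 // sqr_ge0.
have hh : 0 < h^+2 by rewrite exprn_even_gt0.
rewrite /gg -/s ler_pdivlMr // ler_pdivrMr //; apply/andP; split; nra.
Qed.

Lemma gg_lt x y h : h != 0 -> x < y -> gg x h < gg y h.
Proof.
move=> h0 xy; have sp := sqpos x h h0; have rp := sqpos y h h0.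
set s := Num.sqrt (x^+2 + _) in sp *; set r := Num.sqrt (y^+2 + _) in rp *.
have s2 : s^+2 = x^+2 + h^+2 by rewrite sqr_sqrtr // addr_ge0 // sqr_ge0.
have r2 : r^+2 = y^+2 + h^+2 by rewrite sqr_sqrtr // addr_ge0 // sqr_ge0.
have hh : 0 < h^+2 by rewrite exprn_even_gt0.
have key : x * r < y * s.
  have [x0|x0] := leP 0 x.
    have xy2 : x^+2 < y^+2 by nra.
    have : (x*r)^+2 < (y*s)^+2.
      rewrite !exprMn r2 s2 -subr_gt0.
      have -> : y ^+ 2 * (x ^+ 2 + h ^+ 2) - x ^+ 2 * (y ^+ 2 + h ^+ 2) = (y^+2 - x^+2) * h^+2 by ring.
      by rewrite mulr_gt0 // subr_gt0.
    have X0 : 0 <= x * r by rewrite mulr_ge0 // ltW.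
    have Y0 : 0 < y * s by rewrite mulr_gt0 //; lra.
    move: X0 Y0; set X := x * r; set Y := y * s; nra.
  have [y0|y0] := leP 0 y. nra.
  have xy2 : y^+2 < x^+2 by nra.
  have : (y*s)^+2 < (x*r)^+2.
    rewrite !exprMn r2 s2 -subr_gt0.
    have -> : x ^+ 2 * (y ^+ 2 + h ^+ 2) - y ^+ 2 * (x ^+ 2 + h ^+ 2) = (x^+2 - y^+2) * h^+2 by ring.
    by rewrite mulr_gt0 // subr_gt0.
  have X0 : x * r < 0 by nra.
  have Y0 : y * s <= 0 by nra.
  move: X0 Y0; set X := x * r; set Y := y * s; nra.
rewrite /gg -/s -/r -subr_gt0.
have -> : y / r - x / s = (y * s - x * r) / (s * r).
  by field; rewrite !gt_eqF.
by rewrite divr_gt0 ?mulr_gt0 // subr_gt0.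
Qed.

Lemma gg_scale k d h : 0 < k -> gg (k * d) (k * h) = gg d h.
Proof.
move=> k0; rewrite /gg !exprMn -mulrDr sqrtrM ?sqr_ge0 // sqrtr_sqr gtr0_norm //.
by rewrite invfM mulrACA mulfV ?mul1r // gt_eqF.
Qed.

Lemma acos_lt (x y : R) : -1 <= x <= 1 -> -1 <= y <= 1 -> x < y -> acos y < acos x.
Proof.
move=> hx hy xy.
have ix : acos x \in `[0, pi] by rewrite in_itv /= acos_ge0 // acos_lepi.
have iy : acos y \in `[0, pi] by rewrite in_itv /= acos_ge0 // acos_lepi.
rewrite -(ltr_cos iy ix) !acosK //; by rewrite in_itv /=.
Qed.

Definition cr (u v : R * R) := u.1 * v.2 - u.2 * v.1.

Lemma angle_gg (a b t : R * R) :
  angle a b t = acos (gg (dot (vsub a b) (vsub t b)) (cr (vsub a b) (vsub t b))).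
Proof.
rewrite /angle /vnorm /gg -sqrtrM; last by rewrite /dot addr_ge0 // -expr2 sqr_ge0.
congr (acos (_ / Num.sqrt _)); rewrite /dot /cr /=; ring.
Qed.
End G.

Section G2.
Variable R : realType.

Lemma geo (a b c t : R * R) :
  seg_meet a t b c -> orient b c a != 0 -> orient b c t != 0 ->
  orient a t b != 0 -> orient a b c != 0 -> orient a b t != 0 ->
  exists l m : R, [/\ 0 < l, 0 < m, l * orient a b t = m * orient a b c &
                   angle a b c < angle a b t].
Proof.
case: a => a1 a2; case: b => b1 b2; case: c => c1 c2; case: t => t1 t2.
move=> [l [u [/andP[l0 l1] /andP[u0 u1] [E1 E2]]]] Hbca Hbct Hatb Habc Habt.
move: E1 E2 => /= E1 E2.
have D1z : (1 - l) * a1 + l * t1 - ((1 - u) * b1 + u * c1) = 0 by rewrite E1 subrr.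
have D2z : (1 - l) * a2 + l * t2 - ((1 - u) * b2 + u * c2) = 0 by rewrite E2 subrr.
set D1 := _ - _ in D1z; set D2 := _ - _ in D2z.
have I : (1 - l) * orient (b1, b2) (c1, c2) (a1, a2) + l * orient (b1, b2) (c1, c2) (t1, t2) = 0.
  have -> : (1 - l) * orient (b1, b2) (c1, c2) (a1, a2) + l * orient (b1, b2) (c1, c2) (t1, t2)
     = (c1 - b1) * D2 - (c2 - b2) * D1 by rewrite /orient /D1 /D2 /=; ring.
  by rewrite D1z D2z !mulr0 subrr.
have J : (1 - u) * orient (a1, a2) (t1, t2) (b1, b2) + u * orient (a1, a2) (t1, t2) (c1, c2) = 0.
  have -> : (1 - u) * orient (a1, a2) (t1, t2) (b1, b2) + u * orient (a1, a2) (t1, t2) (c1, c2)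
     = (t2 - a2) * D1 - (t1 - a1) * D2 by rewrite /orient /D1 /D2 /=; ring.
  by rewrite D1z D2z !mulr0 subrr.
have K : l * orient (a1, a2) (b1, b2) (t1, t2) = u * orient (a1, a2) (b1, b2) (c1, c2).
  apply/eqP; rewrite -subr_eq0.
  have -> : l * orient (a1, a2) (b1, b2) (t1, t2) - u * orient (a1, a2) (b1, b2) (c1, c2)
     = (b1 - a1) * D2 - (b2 - a2) * D1 by rewrite /orient /D1 /D2 /=; ring.
  by rewrite D1z D2z !mulr0 subrr.
have lpos : 0 < l.
  rewrite lt_neqAle l0 andbT; apply/negP => /eqP l00.
  by move: I Hbca; rewrite -l00 subr0 mul1r mul0r addr0 => ->; rewrite eqxx.
have llt : l < 1.
  rewrite lt_neqAle l1 andbT; apply/negP => /eqP l00.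
  by move: I Hbct; rewrite l00 subrr mul1r mul0r add0r => ->; rewrite eqxx.
have upos : 0 < u.
  rewrite lt_neqAle u0 andbT; apply/negP => /eqP l00.
  by move: J Hatb; rewrite -l00 subr0 mul1r mul0r addr0 => ->; rewrite eqxx.
exists l, u; split => //.
set nA := (a1 - b1) ^+ 2 + (a2 - b2) ^+ 2.
have nApos : 0 < nA.
  rewrite lt_neqAle addr_ge0 ?sqr_ge0 // andbT; apply/negP.
  rewrite eq_sym paddr_eq0 ?sqr_ge0 // !sqrf_eq0 => /andP[/eqP h1 /eqP h2].
  have e1 : b1 - a1 = 0 by rewrite -opprB h1 oppr0.
  have e2 : b2 - a2 = 0 by rewrite -opprB h2 oppr0.
  by move: Habc; rewrite /orient /= e1 e2 !mul0r subrr eqxx.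
rewrite !angle_gg /dot /cr /vsub /=.
have hXe : (a1 - b1) * (t2 - b2) - (a2 - b2) * (t1 - b1) = - orient (a1, a2) (b1, b2) (t1, t2)
  by rewrite /orient /=; ring.
have hCe : (a1 - b1) * (c2 - b2) - (a2 - b2) * (c1 - b1) = - orient (a1, a2) (b1, b2) (c1, c2)
  by rewrite /orient /=; ring.
have hXn : (a1 - b1) * (t2 - b2) - (a2 - b2) * (t1 - b1) != 0 by rewrite hXe oppr_eq0.
have hCn : (a1 - b1) * (c2 - b2) - (a2 - b2) * (c1 - b1) != 0 by rewrite hCe oppr_eq0.
apply: acos_lt; rewrite ?gg_bounds //.
rewrite -(@gg_scale R l _ _ lpos) -[X in _ < X](@gg_scale R u _ _ upos).
have -> : l * ((a1 - b1) * (t2 - b2) - (a2 - b2) * (t1 - b1)) =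
          u * ((a1 - b1) * (c2 - b2) - (a2 - b2) * (c1 - b1)).
  apply/eqP; rewrite -subr_eq0.
  have -> : l * ((a1 - b1) * (t2 - b2) - (a2 - b2) * (t1 - b1)) -
          u * ((a1 - b1) * (c2 - b2) - (a2 - b2) * (c1 - b1)) = (a1 - b1) * D2 - (a2 - b2) * D1
    by rewrite /D1 /D2; ring.
  by rewrite D1z D2z !mulr0 subrr.
have -> : l * ((a1 - b1) * (t1 - b1) + (a2 - b2) * (t2 - b2)) =
          u * ((a1 - b1) * (c1 - b1) + (a2 - b2) * (c2 - b2)) - (1 - l) * nA.
  apply/eqP; rewrite -subr_eq0.
  have -> : l * ((a1 - b1) * (t1 - b1) + (a2 - b2) * (t2 - b2)) -
          (u * ((a1 - b1) * (c1 - b1) + (a2 - b2) * (c2 - b2)) - (1 - l) * nA)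
          = (a1 - b1) * D1 + (a2 - b2) * D2
    by rewrite /D1 /D2 /nA; ring.
  by rewrite D1z D2z !mulr0 addr0.
apply: gg_lt; first by rewrite mulf_neq0 // gt_eqF.
rewrite gtrBl mulr_gt0 // subr_gt0 //.
Qed.
End G2.

Local Close Scope ring_scope.
Section C.
Variable T : finType.
Variables a b c : T.

Definition Qr (u v : T) : bool := ((u == a) && (v != a) && (v != b)) || ((u == b) && (v == c)).
Definition Pr (u v : T) : bool := Qr u v || Qr v u.
Definition Et : {set {set T}} := [set e | [exists u, exists v, (e == [set u; v]) && Pr u v]].

Lemma pair_eq (x y u v : T) : [set x; y] = [set u; v] -> (x = u /\ y = v) \/ (x = v /\ y = u).
Proof.
move=> E.
have : x \in [set u; v] by rewrite -E set21.
have : y \in [set u; v] by rewrite -E set22.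
have : u \in [set x; y] by rewrite E set21.
have : v \in [set x; y] by rewrite E set22.
rewrite !in_set2 => /orP[]/eqP hv /orP[]/eqP hu /orP[]/eqP hy /orP[]/eqP hx; subst; by [left | right].
Qed.

Arguments pair_eq {x y u v}.

Lemma PrC u v : Pr u v = Pr v u.
Proof. by rewrite /Pr orbC. Qed.

Lemma adjE u v : adj Et u v = Pr u v.
Proof.
rewrite /adj inE; apply/existsP/idP.
  case=> u' /existsP [v' /andP [/eqP E P]].
  by case: (pair_eq E) => [[-> ->]|[-> ->]] //; rewrite PrC.
by move=> P; exists u; apply/existsP; exists v; rewrite eqxx.
Qed.

Hypotheses (ab : a != b) (ca : c != a) (cb : c != b).

Lemma memE e : e \in Et ->
  (exists2 t, (t != a) && (t != b) & e = [set a; t]) \/ e = [set b; c].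
Proof.
rewrite inE => /existsP[u /existsP[v /andP[/eqP -> P]]].
case/orP: P => /orP[/andP[/andP[/eqP -> va] vb]|/andP[/eqP -> /eqP ->]].
- by left; exists v; rewrite ?va.
- by right.
- by left; exists u; [rewrite va vb | rewrite setUC].
- by right; rewrite setUC.
Qed.

Lemma Pr_neq u v : Pr u v -> u != v.
Proof.
case/orP => /orP[/andP[/andP[/eqP -> va] vb]|/andP[/eqP -> /eqP ->]].
- by rewrite eq_sym.
- by rewrite eq_sym.
- by [].
- by [].
Qed.

Lemma mid u y w : Pr u y -> Pr y w -> u != w -> (y == a) || (y == c).
Proof.
case: (eqVneq y a) => [->|ya]; first by move=> *.
case: (eqVneq y c) => [->|yc]; first by move=> *; rewrite orbT.
rewrite /Pr /Qr (negbTE ya) (negbTE yc) /= ?andbF /= ?orbF.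
rewrite !andbT; case: (eqVneq y b) => [yb|yb].
  by rewrite /= !andbF /= ?orbF => /eqP -> /eqP ->; rewrite eqxx.
by rewrite /= !andbT ?andbF /= ?orbF => /eqP -> /eqP ->; rewrite eqxx.
Qed.

Lemma cyc_head x s : uniq (x :: s) -> (2 <= size s)%N -> path (adj Et) x s ->
  adj Et (last x s) x -> (x == a) || (x == c).
Proof.
case: s => [|s1 [|s2 s']] //= Hu _ /andP[hx1 /andP[h12 hp]] hl.
apply: (@mid (last s2 s') x s1); rewrite -?adjE //.
apply/eqP => E; move: Hu; rewrite -E.
by rewrite mem_last /= !andbF.
Qed.

Arguments cyc_head {x s}.

Lemma cyc_rot x s1 s : uniq (x :: s1 :: s) -> path (adj Et) x (s1 :: s) ->
  adj Et (last x (s1 :: s)) x ->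
  [/\ uniq (s1 :: rcons s x), path (adj Et) s1 (rcons s x) &
      adj Et (last s1 (rcons s x)) s1].
Proof.
move=> Hu /= /andP[hx1 hp] hl; split.
- by move: Hu; rewrite -(rot_uniq 1) rot1_cons.
- by rewrite rcons_path hp.
- by rewrite last_rcons.
Qed.

Arguments cyc_rot {x s1 s}.

Lemma no_cycle : ~ has_cycle Et.
Proof.
move=> [x [s [Hu Hs Hp Hl]]].
have hx := cyc_head Hu Hs Hp Hl.
case: s Hu Hs Hp Hl hx => [|s1 [|s2 s']] //= Hu _ Hp Hl hx.
have [Hu1 Hp1 Hl1] := cyc_rot Hu Hp Hl.
have sz1 : (2 <= size (rcons (s2 :: s') x))%N by rewrite size_rcons.
have hs1 := cyc_head Hu1 sz1 Hp1 Hl1.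
have [Hu2 Hp2 Hl2] := cyc_rot Hu1 Hp1 Hl1.
have sz2 : (2 <= size (rcons (rcons s' x) s1))%N by rewrite !size_rcons.
have hs2 := cyc_head Hu2 sz2 Hp2 Hl2.
move: Hu; rewrite /= !inE.
case/orP: hx => /eqP ->; case/orP: hs1 => /eqP ->; case/orP: hs2 => /eqP ->;
   rewrite ?eqxx /= ?orbT ?andbF //.
Qed.

Definition toa w := if w == a then [::] else if w == b then [:: c; a] else [:: a].
Definition froma v := if v == a then [::] else if v == b then [:: c; b] else [:: v].

Lemma toa_ok w : path (adj Et) w (toa w) /\ last w (toa w) = a.
Proof.
rewrite /toa; case: (eqVneq w a) => [->|wa] //.
case: (eqVneq w b) => [->|wb] /=; rewrite !adjE /Pr /Qr.
  by rewrite !eqxx ca cb /= ?orbT.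
by rewrite !eqxx wa wb /= ?orbT.
Qed.

Lemma froma_ok v : path (adj Et) a (froma v) /\ last a (froma v) = v.
Proof.
rewrite /froma; case: (eqVneq v a) => [->|va] //.
case: (eqVneq v b) => [->|vb] /=; rewrite !adjE /Pr /Qr.
  by rewrite !eqxx ca cb /= ?orbT.
by rewrite !eqxx va vb /= ?orbT.
Qed.

Lemma szt w : (size (toa w) <= (if w == b then 2 else 1))%N.
Proof. by rewrite /toa; case: (w == a); case: (w == b). Qed.

Lemma szf w : (size (froma w) <= (if w == b then 2 else 1))%N.
Proof. by rewrite /froma; case: (w == a); case: (w == b). Qed.

Lemma diam : diam_le Et 3.
Proof.
move=> u v; case: (eqVneq u v) => [<-|uv]; first by exists [::].
exists (toa u ++ froma v); split.
- rewrite size_cat; have := szt u; have := szf v.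
  case: (eqVneq u b) => [ub|_]; case: (eqVneq v b) => [vb|_] //.
  + by move: uv; rewrite ub vb eqxx.
  + move=> h1 h2; exact: (leq_trans (leq_add h2 h1)).
  + move=> h1 h2; exact: (leq_trans (leq_add h2 h1)).
  + move=> h1 h2; exact: (leq_trans (leq_add h2 h1)).
- have [p1 l1] := toa_ok u; have [p2 l2] := froma_ok v.
  by rewrite cat_path last_cat l1 p1 p2.
Qed.

Lemma edgesE e : e \in Et -> is_edge e.
Proof.
rewrite inE => /existsP[u /existsP[v /andP[/eqP -> P]]].
by rewrite /is_edge cards2 (Pr_neq _ _ P).
Qed.

Lemma tree : spanning_tree Et /\ diam_le Et 3.
Proof.
split; last exact: diam.
split; first exact: edgesE.
- by move=> u v; have [s [_ h]] := diam u v; exists s.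
- exact: no_cycle.
Qed.

End C.
Local Open Scope ring_scope.
Arguments memE {T a b c e}.
Arguments Et {T}.
Arguments pair_eq {T x y u v}.
Arguments geo {R a b c t}.
Arguments tree {T a b c}.


Section Seg.
Variable R : realType.
Lemma segA (p q r s : R * R) : seg_meet p q r s -> seg_meet q p r s.
Proof.
move=> [t [u [/andP[t0 t1] hu [e1 e2]]]]; exists (1 - t), u; split => //.
- apply/andP; split; lra.
- by split; rewrite -?e1 -?e2; ring.
Qed.
Lemma segB (p q r s : R * R) : seg_meet p q r s -> seg_meet p q s r.
Proof.
move=> [t [u [ht /andP[u0 u1] [e1 e2]]]]; exists t, (1 - u); split => //.
- apply/andP; split; lra.
- by split; rewrite ?e1 ?e2; ring.
Qed.
Lemma segS (p q r s : R * R) : seg_meet p q r s -> seg_meet r s p q.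
Proof.
by move=> [t [u [ht hu [e1 e2]]]]; exists u, t; split.
Qed.
End Seg.
Arguments segA {R p q r s}.
Arguments segB {R p q r s}.
Arguments segS {R p q r s}.

Theorem mainTheorem9 (R : realType) (T : finType) (p : T -> (R * R)%type)
  (B : {set {set T}}) (a b : T) (side : bool) (c : T) :
  general_position p ->
  blocker (simple_tree_diam_le p 3) B ->
  degree B a = 1%N ->
  [set a; b] \in B ->
  (* c lies in the chosen open side l(a,b)^+ of the line l(a,b) *)
  (if side then 0 < orient (p a) (p b) (p c) else orient (p a) (p b) (p c) < 0) ->
  (* angle abc is maximal among vertices in l(a,b)^+ *)
  (forall c' : T,
     (if side then 0 < orient (p a) (p b) (p c') else orient (p a) (p b) (p c') < 0) ->
     angle (p a) (p b) (p c') <= angle (p a) (p b) (p c)) ->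
  [set b; c] \in B.
Proof.
move=> [pinj gp] [_ Hblock _] deg1 abB side_c maxc.
have oc : orient (p a) (p b) (p c) != 0.
  by case hs: side in side_c *; [rewrite gt_eqF | rewrite lt_eqF].
have ab : a != b by apply: contra oc => /eqP ->; rewrite /orient !subrr !mul0r subrr.
have ca : c != a by apply: contra oc => /eqP ->; rewrite /orient !subrr !mulr0 subrr.
have cb : c != b by apply: contra oc => /eqP ->; rewrite /orient mulrC subrr.
have ba : b != a by rewrite eq_sym.
have ac : a != c by rewrite eq_sym.
have bc : b != c by rewrite eq_sym.
have nz : forall x y z, x != y -> y != z -> x != z -> orient (p x) (p y) (p z) != 0.
  by move=> x y z h1 h2 h3; apply: gp.
have key : forall t, t != a -> t != b -> t != c -> seg_meet (p a) (p t) (p b) (p c) -> False.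
  move=> t ta tb tc sm.
  have at' : a != t by rewrite eq_sym.
  have bt : b != t by rewrite eq_sym.
  have ct : c != t by rewrite eq_sym.
  have [l [m [l0 m0 K ang]]] := geo sm (nz b c a bc ca ba) (nz b c t bc ct bt)
     (nz a t b at' tb ab) oc (nz a b t ab bt at').
  have st : if side then 0 < orient (p a) (p b) (p t) else orient (p a) (p b) (p t) < 0.
    by case hs: side in side_c *; nra.
  have := maxc t st; lra.
have [Hsp Hdm] := tree ca cb.
have Htr : simple_tree_diam_le p 3 (Et a b c).
  split => // e f eE fE [x [y [z [w [ex fw dj sm]]]]].
  case: (memE eE) (memE fE) => [[t1 /andP[t1a t1b] E1]|E1] [[t2 /andP[t2a t2b] E2]|E2].
  - by move: dj; rewrite -setI_eq0 E1 E2 => /eqP/setP/(_ a); rewrite !inE !eqxx.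
  - have t1c : t1 != c.
      apply/eqP => t1c; move: dj; rewrite -setI_eq0 E1 E2 t1c => /eqP/setP/(_ c).
      by rewrite !inE !eqxx !orbT.
    rewrite E1 in ex; rewrite E2 in fw.
    case: (pair_eq ex) => [[h1 h2]|[h1 h2]]; case: (pair_eq fw) => [[h3 h4]|[h3 h4]]; rewrite -h1 -h2 -h3 -h4 in sm;
      apply: (key t1 t1a t1b t1c);
      first [exact: sm | exact: segA sm | exact: segB sm | exact: segA (segB sm)].
  - have t2c : t2 != c.
      apply/eqP => t2c; move: dj; rewrite -setI_eq0 E1 E2 t2c => /eqP/setP/(_ c).
      by rewrite !inE !eqxx !orbT.
    rewrite E1 in ex; rewrite E2 in fw; move/segS: sm => sm.
    case: (pair_eq ex) => [[h1 h2]|[h1 h2]]; case: (pair_eq fw) => [[h3 h4]|[h3 h4]]; rewrite -h1 -h2 -h3 -h4 in sm;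
      apply: (key t2 t2a t2b t2c);
      first [exact: sm | exact: segA sm | exact: segB sm | exact: segA (segB sm)].
  - by move: dj; rewrite -setI_eq0 E1 E2 => /eqP/setP/(_ b); rewrite !inE !eqxx.
have [e eB eE] := Hblock _ Htr.
case: (memE eE) => [[t /andP[ta tb] E1]|E1]; last by rewrite -E1.
exfalso.
have [f Hf] := cards1P (introT eqP deg1).
have h1 : e \in [set f] by rewrite -Hf inE eB E1 set21.
have h2 : [set a; b] \in [set f] by rewrite -Hf inE abB set21.
move: h1 h2; rewrite !inE => /eqP ef /eqP abf.
have := pair_eq (etrans (esym E1) (etrans ef (esym abf))).
by case=> [[_ tb']|[ab' _]]; [move: tb; rewrite tb' eqxx | move: ab; rewrite ab' eqxx].
Qed.
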